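(* Let $a, b$ be positive integers with $b \le 2a$, and let $T_{a,b} = \{C_{i,1} : 1 \le i \le 2a+1\} \cup \{C_{a+1,j} : 2 \le j \le b+1\}$, of size $n = 2a+b+1$. Then on the $n \times n$ board, $$\mathrm{cp}_{\mathrm{fixed}}(T_{a,b}) = \left\lceil \frac{2a+1}{2b+1} \right\rceil.$$
   Context: For integers $i,j$, $C_{i,j}$ denotes the unit square cell in column $i$ and row $j$ of the integer grid (columns numbered left to right, rows numbered top to bottom). A polyomino is a finite set of cells; its size is its number of cells. For a polyomino $\mathcal{P}$ of size $n$ the board is $\mathbb{B} = \{C_{i,j} : 1 \le i,j \le n\}$. The shift of $\mathcal{P}$ by integers $(c,d)$ is $\mathcal{P}+(c,d) = \{C_{x+c,y+d} : C_{x,y} \in \mathcal{P}\}$; a fixed copy of $\mathcal{P}$ is any shift of $\mathcal{P}$ (no rotations). A set of polyominoes is a valid arrangement if each is contained in $\mathbb{B}$ and they are pairwise disjoint. A fixed packing of $\mathcal{P}$ is a set of fixed copies of $\mathcal{P}$ forming a valid arrangement such that adding any further fixed copy of $\mathcal{P}$ yields an invalid arrangement. The clumsy fixed packing number $\mathrm{cp}_{\mathrm{fixed}}(\mathcal{P})$ is the minimum number of polyominoes in a fixed packing of $\mathcal{P}$ on the $n \times n$ board. *)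

(* Defs.v *)
From Stdlib Require Import ZArith List Lia.
Import ListNotations.
Open Scope Z_scope.

(* C_{i,j} is represented by the pair (i, j): column i, row j. *)
Definition cell := (Z * Z)%type.

Definition polyomino := list cell.

Definition shift (P : polyomino) (v : Z * Z) : polyomino :=
  map (fun x : cell => (fst x + fst v, snd x + snd v)) P.

Definition in_board (n : Z) (Q : polyomino) : Prop :=
  forall x, In x Q -> 1 <= fst x <= n /\ 1 <= snd x <= n.

Definition disjoint (Q R : polyomino) : Prop :=
  forall x, In x Q -> ~ In x R.

Definition fixed_packing (P : polyomino) (n : Z) (S : list (Z * Z)) : Prop :=
  NoDup S /\
  (forall v, In v S -> in_board n (shift P v)) /\
  (forall u v, In u S -> In v S -> u <> v -> disjoint (shift P u) (shift P v)) /\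
  (forall w, in_board n (shift P w) ->
     exists v, In v S /\ ~ disjoint (shift P w) (shift P v)).

Definition cp_fixed_eq (P : polyomino) (n : Z) (k : nat) : Prop :=
  (exists S, fixed_packing P n S /\ length S = k) /\
  (forall S, fixed_packing P n S -> (k <= length S)%nat).

Definition T_ab (a b : nat) : polyomino :=
  map (fun i : nat => (Z.of_nat i, 1)) (seq 1 (2 * a + 1)) ++
  map (fun j : nat => (Z.of_nat a + 1, Z.of_nat j)) (seq 2 b).

(* Main.v *)
Require Import Defs.
From Stdlib Require Import ZArith List Lia.
Import ListNotations.
Open Scope Z_scope.

Lemma mem_shift a b x y c d :
  In (x,y) (Defs.shift (T_ab a b) (c,d)) <->
  (y = 1+d /\ 1+c <= x <= 2*Z.of_nat a+1+c) \/
  (x = Z.of_nat a+1+c /\ 2+d <= y <= Z.of_nat b+1+d).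
Proof.
  unfold Defs.shift, T_ab. rewrite map_app, in_app_iff, !map_map, !in_map_iff.
  split.
  - intros [[i [Hi Hs]] | [i [Hi Hs]]]; apply in_seq in Hs; cbn [fst snd] in Hi; apply pair_equal_spec in Hi; destruct Hi as [<- <-]; lia.
  - intros [[H1 H2] | [H1 H2]].
    + left. exists (Z.to_nat (x - c)). split; [cbn [fst snd]; apply pair_equal_spec; split; lia | apply in_seq; lia].
    + right. exists (Z.to_nat (y - d)). split; [cbn [fst snd]; apply pair_equal_spec; split; lia | apply in_seq; lia].
Qed.

Lemma rows a b x y c d : In (x,y) (Defs.shift (T_ab a b) (c,d)) ->
  1 + d <= y <= Z.of_nat b + 1 + d.
Proof. intros H; apply mem_shift in H; lia. Qed.

Lemma board_iff a b c d : (0 < b)%nat ->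
  in_board (Z.of_nat (2*a+b+1)) (Defs.shift (T_ab a b) (c,d)) <->
  (0 <= c <= Z.of_nat b /\ 0 <= d <= 2 * Z.of_nat a).
Proof.
  intros Hb; split.
  - intros H.
    assert (H1 := H (1+c, 1+d)). assert (H2 := H (2*Z.of_nat a+1+c, 1+d)).
    assert (H3 := H (Z.of_nat a+1+c, Z.of_nat b+1+d)).
    rewrite mem_shift in H1, H2, H3. cbn [fst snd] in *.
    specialize (H1 ltac:(lia)). specialize (H2 ltac:(lia)). specialize (H3 ltac:(lia)).
    lia.
  - intros Hr [x y] Hin. apply mem_shift in Hin. cbn [fst snd]. lia.
Qed.

Lemma count_lemma (B D : Z) (HB : 0 <= B) (HD : D = 2*B+1) : forall (k : nat) (L : list Z),
  (forall m : nat, (m < k)%nat -> exists x, In x L /\ Z.abs (x - Z.of_nat m * D) <= B) ->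
  (k <= length L)%nat.
Proof.
  induction k as [|k IH]; intros L H; [lia|].
  destruct (H k ltac:(lia)) as [x [Hx Hxd]].
  assert (Hlt := remove_length_lt Z.eq_dec L x Hx).
  enough (k <= length (remove Z.eq_dec x L))%nat by lia.
  apply IH. intros m Hm. destruct (H m ltac:(lia)) as [y [Hy Hyd]].
  exists y. split; [|lia]. apply in_in_remove; [|exact Hy].
  intros ->. assert (Z.of_nat m + 1 <= Z.of_nat k) by lia. nia.
Qed.

Theorem theorem6 (a b : nat) :
  (0 < a)%nat -> (0 < b)%nat -> (b <= 2 * a)%nat ->
  cp_fixed_eq (T_ab a b) (Z.of_nat (2 * a + b + 1))
    ((2 * a + 1 + 2 * b) / (2 * b + 1))%nat.
Proof.
  intros Ha Hb Hab.
  set (K := ((2 * a + 1 + 2 * b) / (2 * b + 1))%nat).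
  assert (HK : (K * (2*b+1) <= 2*a+2*b+1 < K*(2*b+1) + (2*b+1))%nat).
  { pose proof (Nat.div_mod (2 * a + 1 + 2 * b) (2*b+1) ltac:(lia)).
    pose proof (Nat.mod_upper_bound (2 * a + 1 + 2 * b) (2*b+1) ltac:(lia)).
    fold K in H. lia. }
  set (A := Z.of_nat a). set (B := Z.of_nat b). set (D := 2*B+1).
  assert (HKZ : Z.of_nat K * D <= 2*A+2*B+1 < Z.of_nat K * D + D) by (subst A B D; lia).
  assert (HK1 : (1 <= K)%nat) by nia.
  split.
  -
    set (c0 := B / 2).
    assert (Hc0 : 2*c0 <= B <= 2*c0+1) by (subst c0; Z.div_mod_to_equations; lia).
    set (f := fun m : nat => (c0, Z.min (Z.of_nat m * D + B) (2*A))).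
    assert (Hsep : forall i j : nat, (i < K)%nat -> (j < K)%nat -> (i < j)%nat ->
               snd (f i) + B + 1 <= snd (f j) /\ snd (f i) = Z.of_nat i * D + B).
    { intros i j Hi Hj Hij. unfold f; cbn [fst snd].
      assert (Z.of_nat i + 1 <= Z.of_nat j) by lia.
      assert (Z.of_nat j + 1 <= Z.of_nat K) by lia.
      assert (Z.of_nat i * D + D <= Z.of_nat j * D) by nia.
      assert (Z.of_nat j * D + D <= Z.of_nat K * D) by nia.
      lia. }
    assert (Hsep2 : forall i j : nat, (i < K)%nat -> (j < K)%nat -> i <> j ->
               Z.abs (snd (f i) - snd (f j)) >= B + 1).
    { intros i j Hi Hj Hij. destruct (Nat.lt_total i j) as [H|[H|H]]; [|lia|].
      - destruct (Hsep i j Hi Hj H). lia.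
      - destruct (Hsep j i Hj Hi H). lia. }
    assert (Hrng : forall i : nat, (i < K)%nat -> 0 <= snd (f i) <= 2 * A).
    { intros i Hi. unfold f; cbn [fst snd]. lia. }
    exists (map f (seq 0 K)). split; [|now rewrite length_map, length_seq].
    split; [|split; [|split]].
    + apply NoDup_map_NoDup_ForallPairs; [|apply seq_NoDup].
      intros i j Hi Hj Heq. apply in_seq in Hi, Hj.
      destruct (Nat.eq_dec i j) as [|Hne]; [assumption|].
      specialize (Hsep2 i j ltac:(lia) ltac:(lia) Hne). rewrite Heq in Hsep2. lia.
    + intros v Hv. apply in_map_iff in Hv. destruct Hv as [i [<- Hi]]. apply in_seq in Hi.
      specialize (Hrng i ltac:(lia)). unfold f in *. cbn [fst snd] in Hrng.
      apply board_iff; [lia|]. subst B; lia.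
    + intros u v Hu Hv Huv. apply in_map_iff in Hu, Hv.
      destruct Hu as [i [<- Hi]]. destruct Hv as [j [<- Hj]]. apply in_seq in Hi, Hj.
      assert (i <> j) by (intros ->; auto).
      specialize (Hsep2 i j ltac:(lia) ltac:(lia) ltac:(assumption)).
      intros [x y] H1 H2. unfold f in H1, H2, Hsep2. cbn [fst snd] in Hsep2.
      apply rows in H1, H2. fold B in H1, H2. lia.
    + intros [c' d'] Hw. apply board_iff in Hw; [|lia]. fold A B in Hw.
      set (m := Z.to_nat (d' / D)).
      assert (Hm : Z.of_nat m * D <= d' < Z.of_nat m * D + D).
      { subst m. Z.div_mod_to_equations; nia. }
      assert (HmK : (m < K)%nat).
      { assert (Z.of_nat m < Z.of_nat K) by nia. lia. }
      exists (f m). split; [apply in_map; apply in_seq; lia|].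
      assert (Hd : Z.abs (snd (f m) - d') <= B).
      { unfold f; cbn [fst snd]. assert (Z.of_nat m + 1 <= Z.of_nat K) by lia.
        assert (Z.of_nat m * D + D <= Z.of_nat K * D) by nia. lia. }
      unfold f in Hd |- *. cbn [fst snd] in Hd. set (d := Z.min (Z.of_nat m * D + B) (2 * A)) in *.
      destruct (Z.lt_total d d') as [Hlt|[Heq|Hgt]].
      * intros Hdis. apply (Hdis (A+1+c0, 1+d')); apply mem_shift; lia.
      * intros Hdis. apply (Hdis (A+1+c', 1+d')); apply mem_shift; lia.
      * intros Hdis. apply (Hdis (A+1+c', 1+d)); apply mem_shift; lia.
  -
    intros S [_ [HS [_ Hmax]]].
    rewrite <- (length_map snd S).
    apply (count_lemma B D ltac:(lia) eq_refl K (map snd S)).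
    intros m Hm.
    assert (Hmd : Z.of_nat m * D <= 2*A).
    { assert (Z.of_nat m + 1 <= Z.of_nat K) by lia. nia. }
    destruct (Hmax (0, Z.of_nat m * D)) as [[c d] [Hv Hnd]].
    { apply board_iff; [lia|]. fold A B. lia. }
    exists d. split; [apply (in_map snd S (c,d)); exact Hv|].
    destruct (Z_le_gt_dec (Z.abs (d - Z.of_nat m * D)) B) as [Hok|Hbad]; [exact Hok|].
    exfalso. apply Hnd. intros [x y] H1 H2.
    apply rows in H1, H2. fold B in H1, H2. lia.
Qed.
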